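(* Let $\{X_\alpha\}_{\alpha\in I}$ be a family of non-empty topological spaces. Then the product $\prod_{\alpha\in I}X_\alpha$ (with the Tychonoff product topology) is dense-connected if and only if every $X_\alpha$ is dense-connected.
   Context: A space $X$ is dense-connected if every dense subset of $X$ (with the subspace topology) is connected. *)

(* Defs.v *)
From HB Require Import structures.
From mathcomp Require Import all_boot all_order all_algebra.
From mathcomp Require Import all_classical all_reals topology.
Set Implicit Arguments. Unset Strict Implicit. Unset Printing Implicit Defensive.
Local Open Scope classical_set_scope.

(* A space X is dense-connected if every dense subset of X is connected
   (mathcomp's [connected A] is connectedness of A in the subspace topology). *)
Definition dense_connected (X : topologicalType) : Prop :=
  forall D : set X, dense D -> connected D.

(* Main.v *)
Require Import Defs.
From HB Require Import structures.
From mathcomp Require Import all_boot all_order all_algebra.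
From mathcomp Require Import all_classical all_reals topology.
Local Open Scope classical_set_scope.

Definition hyper (T : topologicalType) : Prop :=
  forall U V : set T, open U -> open V -> U !=set0 -> V !=set0 -> U `&` V !=set0.

Lemma hyper_dc (T : topologicalType) : hyper T -> dense_connected T.
Proof.
move=> H D dD B B0 [C oC BE] [E cE BE'].
apply/seteqP; split; first by rewrite BE; apply: subIsetl.
move=> x Dx; apply: contrapT => nBx.
have Ex : ~ E x by move=> Ex; apply: nBx; rewrite BE'.
have : (C `&` ~` E) !=set0.
  apply: H => //; first exact: closed_openC.
  - by case: B0 => b; rewrite BE => -[_ Cb]; exists b.
  - by exists x.
move=> /(dD _) [] //; first by apply: openI => //; exact: closed_openC.
move=> d [[Cd nEd] Dd].
have : B d by rewrite BE.
by rewrite BE' => -[].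
Qed.

Lemma dc_hyper (T : topologicalType) : dense_connected T -> hyper T.
Proof.
move=> dc U V oU oV [u Uu] [v Vv]; apply: contrapT => nUV.
have clO : forall O : set T, open O -> ~ (O `&` U !=set0) ->
    forall o, O o -> ~ closure U o.
  move=> O oO nOU o Oo clo; apply nOU.
  have [w [Uw Ow]] := clo O (open_nbhs_nbhs (conj oO Oo)).
  by exists w.
set D := U `|` ~` closure U.
have dD : dense D.
  move=> O [o Oo] oO.
  case: (pselect (O `&` U !=set0)) => [[w [Ow Uw]]| nOU].
    by exists w; split => //; left.
  by exists o; split => //; right; apply: (clO O oO nOU).
have UD : U = D.
  apply: (dc D dD U); first by exists u.
    exists U => //; apply/seteqP; split => y.
      by move=> Uy; split => //; left.
    by case.
  exists (closure U); first exact: closed_closure.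
  apply/seteqP; split => y.
    by move=> Uy; split; [left|apply: subset_closure].
  by case=> -[].
apply nUV; exists v; split => //.
have : D v.
  right; apply: (clO V oV) => // -[w [Vw Uw]]; apply nUV.
  by exists w.
by rewrite -UD.
Qed.
Lemma proj_hyper (I : choiceType) (X : I -> topologicalType)
  (hne : forall i : I, [set: X i] !=set0) :
  hyper (prod_topology X) -> forall i, hyper (X i).
Proof.
move=> H i U V oU oV [u Uu] [v Vv].
pose f0 : prod_topology X := fun j => projT1 (cid (hne j)).
pose p : prod_topology X -> X i := @proj I X i.
have op : forall A : set (X i), open A -> open (p @^-1` A).
  by move=> A oA; apply: (proj1 (continuousP p)) => //; exact: proj_continuous.
have ne : forall (A : set (X i)) a, A a -> (p @^-1` A) !=set0.
  by move=> A a Aa; exists (dfwith f0 i a); rewrite /p /proj /= dfwithin.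
have [z [Uz Vz]] := H _ _ (op _ oU) (op _ oV) (ne _ _ Uu) (ne _ _ Vv).
by exists (p z).
Qed.
Lemma prod_hyper (I : choiceType) (X : I -> topologicalType) :
  (forall i, hyper (X i)) -> hyper (prod_topology X).
Proof.
move=> H.
pose G : set_system (prod_topology X) := [set A | forall V, open V -> V !=set0 ->
   exists W, [/\ open W, W !=set0 & W `<=` A `&` V]].
have FG : Filter G.
  constructor.
  - by move=> V oV V0; exists V; split => // x Vx.
  - move=> P Q GP GQ V oV V0.
    have [W [oW W0 WP]] := GP V oV V0.
    have [W' [oW' W'0 W'Q]] := GQ W oW W0.
    exists W'; split => // x /W'Q [Qx /WP [Px Vx]]; by split.
  - move=> P Q PQ GP V oV V0.
    have [W [oW W0 WP]] := GP V oV V0.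
    by exists W; split => // x /WP [/PQ Qx Vx].
have key : forall f : prod_topology X, (G : set_system _) --> f.
  move=> f; apply: (proj2 (@cvg_sup _ _ (fun i => Topological.class (initial_topology (fun f : (forall i, X i) => f i))) G f FG)) => i.
  move=> A /= [_ [[B oB <-] Bf BA]].
  rewrite nbhs_filterE; apply: (@filterS _ G FG _ _ BA) => V oV [v Vv].
  pose p : prod_topology X -> X i := @proj I X i.
  have opV : open (p @` V) by exact: proj_open.
  have [y [[h Vh hy] By]] := H i _ _ opV oB (ex_intro _ (p v) (ex_intro2 _ _ v Vv erefl)) (ex_intro _ (f i) Bf).
  exists (V `&` p @^-1` B); split.
  - apply: openI => //; apply: (proj1 (continuousP p)) => //; exact: proj_continuous.
  - by exists h; split => //; rewrite /= hy.
  - by move=> x [Vx Bx]; split.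
move=> U V oU oV [u Uu] V0.
have GU : G U by apply: (key u); apply: open_nbhs_nbhs.
have [W [_ [w Ww] WU]] := GU V oV V0.
by exists w; apply: WU.
Qed.

Theorem proposition4p12 (I : Type) (X : I -> topologicalType)
  (hne : forall i : I, [set: X i] !=set0) :
  dense_connected (prod_topology X) <-> (forall i : I, dense_connected (X i)).
Proof.
split.
  move=> dcP i; apply: hyper_dc.
  exact (@proj_hyper {classic I} X hne (dc_hyper _ dcP) i).
move=> H; apply: hyper_dc.
have P := @prod_hyper {classic I} X (fun i => dc_hyper _ (H i)).
exact P.
Qed.
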